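(* Let $p$ be an odd prime, $n\ge2$, and $m_1,\dots,m_n$ integers with $1\le m_i\le p-1$. Let $\Phi=\left(\prod_{i=1}^n(s_i+1)^{m_i}-1\right)^p\in\mathbb Z[s_1,\dots,s_n]$, and for $0\le j_1,\dots,j_n\le p-1$ let $C_{j_1\cdots j_n}$ be the coefficient of $s_1^{j_1}\cdots s_n^{j_n}$ in $\Phi$ (equivalently in the image of $\Phi$ in $\mathbb Z[s_1,\dots,s_n]/(s_1^p,\dots,s_n^p)$). Then $$p^2\ \Big|\ \sum_{j_1=1}^{p-1}\cdots\sum_{j_n=1}^{p-1}(-1)^{j_1+\cdots+j_n}C_{j_1\cdots j_n}.$$ *)

(* Defs.v *)
From HB Require Import structures.
From mathcomp Require Import all_boot all_order all_algebra.
Set Implicit Arguments. Unset Strict Implicit. Unset Printing Implicit Defensive.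
Import Order.TTheory GRing.Theory Num.Theory.
Local Open Scope ring_scope.

(* Truncated multivariate polynomial ring Z[s_1..s_n]/(s_1^p,...,s_n^p),
   represented by coefficient functions on exponent vectors.  Only the
   coefficients at exponents e with all e_i <= p-1 are meaningful; all
   operations below compute those coefficients exactly. *)
Definition mexp (n : nat) := {ffun 'I_n -> nat}.
Definition tpoly (n : nat) := mexp n -> int.

Definition tone (n : nat) : tpoly n := fun e => (([forall k, e k == 0%N]) : int).
Definition tvar (n : nat) (i : 'I_n) : tpoly n :=
  fun e => (([forall k, e k == (k == i) :> nat]) : int).
Definition tadd n (f g : tpoly n) : tpoly n := fun e => f e + g e.
Definition tsub n (f g : tpoly n) : tpoly n := fun e => f e - g e.

Definition tmul (p n : nat) (f g : tpoly n) : tpoly n := fun e =>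
  \sum_(d : {ffun 'I_n -> 'I_p} | [forall k, (d k <= e k)%N])
     f [ffun k => nat_of_ord (d k)] * g [ffun k => (e k - d k)%N].

Definition tpow (p n : nat) (f : tpoly n) (k : nat) : tpoly n :=
  iter k (@tmul p n f) (@tone n).

Definition Phi (p n : nat) (m : 'I_n -> nat) : tpoly n :=
  tpow p (tsub (\big[@tmul p n/@tone n]_(i < n) tpow p (tadd (tvar i) (@tone n)) (m i))
               (@tone n)) p.

Definition Ccoef (p n : nat) (m : 'I_n -> nat) (j : {ffun 'I_n -> 'I_p}) : int :=
  Phi p m [ffun k => nat_of_ord (j k)].

(* Main.v *)
Require Import Defs.
From HB Require Import structures.
From mathcomp Require Import all_boot all_order all_algebra.
From mathcomp Require Import ring.
Import Order.TTheory GRing.Theory Num.Theory.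
Set Implicit Arguments. Unset Strict Implicit. Unset Printing Implicit Defensive.
Local Open Scope ring_scope.

Section S.
Variables (p n : nat).

Definition feq (f g : tpoly n) := forall e : mexp n, (forall k, e k < p)%N -> f e = g e.

Definition Bf (a : 'I_n -> nat) : tpoly n := fun e => \prod_k ('C(a k, e k))%:Z.

Lemma forall_prod (P : pred 'I_n) : (([forall k, P k]) : int) = \prod_k ((P k) : int).
Proof.
case: (boolP [forall k, P k]) => [/forallP H|/forallPn [k Hk]].
  by rewrite big1 // => k _; rewrite H.
by rewrite (bigD1 k) //= (negbTE Hk) mul0r.
Qed.

Lemma feq_mul (f f' g g' : tpoly n) : feq f f' -> feq g g' -> feq (tmul p f g) (tmul p f' g').
Proof.
move=> Hf Hg e He; apply: eq_bigr => d /forallP Hd.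
rewrite Hf ?Hg // => k; rewrite ffunE //.
by apply: leq_ltn_trans (He k); apply: leq_subr.
Qed.

Lemma conv1 (a b e : nat) : (e < p)%N ->
  (\sum_(x < p | (x <= e)%N) 'C(a, x) * 'C(b, e - x))%N = 'C(a + b, e).
Proof.
move=> he; rewrite -binomial.Vandermonde.
rewrite (big_ord_widen p (fun x => 'C(a, x) * 'C(b, e - x))%N he).
by apply: eq_bigl => x; rewrite ltnS.
Qed.


Lemma convB (a b : 'I_n -> nat) (e : mexp n) : (forall k, e k < p)%N ->
 \sum_(d : {ffun 'I_n -> 'I_p} | [forall k, (d k <= e k)%N])
    \prod_k (('C(a k, d k))%:Z * ('C(b k, e k - d k))%:Z) = \prod_k ('C(a k + b k, e k))%:Z.
Proof.
move=> He.
transitivity (\prod_k \sum_(x < p | (x <= e k)%N) (('C(a k, x))%:Z * ('C(b k, e k - x))%:Z)).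
  rewrite bigA_distr_big_dep; apply: eq_bigl => d.
  by apply/forallP/familyP => H k; have := H k.
apply: eq_bigr => k _; rewrite -conv1 //.
rewrite (big_morph Posz PoszD (erefl _)); apply: eq_bigr => x _; by rewrite PoszM.
Qed.

Lemma mulBL (a : 'I_n -> nat) K (c : nat -> int) (b : nat -> 'I_n -> nat) :
  feq (tmul p (Bf a) (fun e => \sum_(t < K) c t * Bf (b t) e))
      (fun e => \sum_(t < K) c t * Bf (fun k => a k + b t k)%N e).
Proof.
move=> e He; rewrite /tmul.
under eq_bigr do rewrite mulr_sumr.
rewrite exchange_big; apply: eq_bigr => t _.
rewrite /Bf -convB // mulr_sumr; apply: eq_bigr => d _.
rewrite mulrCA; congr (_ * _); rewrite -big_split /=.
by apply: eq_bigr => k _; rewrite !ffunE.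
Qed.


Lemma Bf_ext (a b : 'I_n -> nat) : (forall k, a k = b k) -> forall e, Bf a e = Bf b e.
Proof. by move=> H e; apply: eq_bigr => k _; rewrite H. Qed.

Lemma tone_B e : @tone n e = Bf (fun _ => 0%N) e.
Proof.
rewrite /tone forall_prod; apply: eq_bigr => k _; by rewrite bin0n.
Qed.

Lemma var_B i e : tadd (tvar i) (@tone n) e = Bf (fun k => nat_of_bool (k == i)) e.
Proof.
rewrite /tadd /tvar /tone /Bf !forall_prod.
rewrite (bigD1 i) //= [X in _ + X](bigD1 i) //= [X in _ = X](bigD1 i) //= eqxx.
have E1 : \prod_(k < n | k != i) ((e k == (k == i) :> nat) : int)
        = \prod_(k < n | k != i) ((e k == 0%N) : int).
  by apply: eq_bigr => k /negbTE ->.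
have E2 : \prod_(k < n | k != i) ('C((k == i), e k))%:Z
        = \prod_(k < n | k != i) ((e k == 0%N) : int).
  by apply: eq_bigr => k /negbTE ->; rewrite bin0n.
rewrite E1 E2 -mulrDl; congr (_ * _).
by case: (e i) => [|[|x]].
Qed.

Lemma feq_refl (f : tpoly n) : feq f f. Proof. by []. Qed.

Lemma mulBB (a b : 'I_n -> nat) :
  feq (tmul p (Bf a) (Bf b)) (Bf (fun k => a k + b k)%N).
Proof.
move=> e He; rewrite /tmul /Bf -convB //; apply: eq_bigr => d _.
by rewrite -big_split /=; apply: eq_bigr => k _; rewrite !ffunE.
Qed.

Lemma feq_pow (F G : tpoly n) k : feq F G -> feq (tpow p F k) (tpow p G k).
Proof.
move=> H; elim: k => [|k IH] //=.
by apply: feq_mul.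
Qed.

Lemma powB (a : 'I_n -> nat) k : feq (tpow p (Bf a) k) (Bf (fun i => k * a i)%N).
Proof.
elim: k => [|k IH] e He /=.
  by rewrite tone_B; apply: Bf_ext => i; rewrite mul0n.
rewrite (feq_mul (feq_refl (Bf a)) IH) // mulBB //.
Qed.

Lemma bigB (m : 'I_n -> nat) :
  feq (\big[@tmul p n/@tone n]_(i < n) tpow p (tadd (tvar i) (@tone n)) (m i)) (Bf m).
Proof.
have H := @big_ind2 _ _ (fun f a => feq f (Bf a)) (@tone n) (@tmul p n)
   (fun _ => 0%N) (fun a b k => a k + b k)%N.
move=> e He.
have HH : feq (\big[@tmul p n/@tone n]_(i < n) tpow p (tadd (tvar i) (@tone n)) (m i))
   (Bf (\big[(fun a b (k : 'I_n) => a k + b k)%N/(fun _ => 0%N)]_(i < n)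
           (fun (k : 'I_n) => m i * (k == i))%N)).
  apply: H.
  - by move=> e' _; rewrite tone_B.
  - move=> f a g b Hf Hg e' He'; rewrite (feq_mul Hf Hg) // mulBB //.
  - move=> i _ e' He'.
    rewrite (feq_pow _ (G := Bf (fun k => nat_of_bool (k == i)))) //.
      by rewrite powB.
    by move=> e'' _; rewrite var_B.
rewrite (HH e He).
- apply: Bf_ext => k.
  rewrite (big_morph (fun a : 'I_n -> nat => a k) (id1 := 0%N) (op1 := addn)) //.
  rewrite (bigD1 k) //= eqxx muln1 big1 ?addn0 // => j /negbTE.
  by rewrite eq_sym => ->; rewrite muln0.
Qed.


Lemma tmulBl (f g h : tpoly n) e : tmul p (tsub f g) h e = tmul p f h e - tmul p g h e.
Proof. rewrite /tmul -sumrB; apply: eq_bigr => d _; by rewrite /tsub mulrBl. Qed.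

End S.

Definition cc (q t : nat) : int := ('C(q, t))%:Z * (-1) ^+ (q - t).

Lemma alg (b : nat -> int) q :
  \sum_(t < q.+1) cc q t * b t.+1 - \sum_(t < q.+1) cc q t * b t
  = \sum_(t < q.+2) cc q.+1 t * b t.
Proof.
rewrite [RHS]big_ord_recl [X in _ - X]big_ord_recl /=.
have E : forall t : 'I_q.+1, cc q.+1 (bump 0 t) * b (bump 0 t) =
    cc q t * b t.+1 + ('C(q, t.+1))%:Z * (-1) ^+ (q - t) * b t.+1.
  move=> t; rewrite /cc /bump /= add1n subSS binS PoszD.
  by rewrite mulrDl mulrDl addrC.
under [X in _ = _ + X]eq_bigr do rewrite E.
rewrite big_split /= [X in _ = _ + (_ + X)]big_ord_recr /=.
rewrite bin_small // !mul0r addr0.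
have E2 : forall t : 'I_q, ('C(q, t.+1))%:Z * (-1) ^+ (q - t) * b t.+1
     = - (cc q (bump 0 t) * b (bump 0 t)).
  move=> t; rewrite /cc /bump /= add1n -(subnSK (ltn_ord t)) exprS.
  by rewrite mulN1r mulrN !mulNr.
under [X in _ = _ + (_ + X)]eq_bigr do rewrite E2.
rewrite sumrN /cc !subn0 !bin0 exprS mulN1r.
set A := \sum_(i < q.+1) _.
set B := \sum_(i < q) _.
rewrite mul1r mul1r mulNr; ring.
Qed.


Lemma powF p n (m : 'I_n -> nat) q :
  feq p (tpow p (tsub (\big[@tmul p n/@tone n]_(i < n) tpow p (tadd (tvar i) (@tone n)) (m i)) (@tone n)) q)
     (fun e => \sum_(t < q.+1) cc q t * Bf (fun k => t * m k)%N e).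
Proof.
set X := \big[_/_]_(i < n) _.
have HX : feq p X (Bf m) by apply: bigB.
have HF : feq p (tsub X (@tone n)) (tsub (Bf m) (Bf (fun _ => 0%N))).
  by move=> e He; rewrite /tsub HX // tone_B.
elim: q => [|q IH] e He /=.
  rewrite big_ord1 /cc /= mul1r tone_B; apply: Bf_ext => k; by rewrite mul0n.
rewrite (feq_mul HF IH) // tmulBl !(@mulBL p n _ _ (cc q) (fun t k => t * m k)%N) //.

rewrite -(alg (fun t => Bf (fun k => t * m k)%N e)); congr (_ - _); apply: eq_bigr => t _; congr (_ * _); apply: Bf_ext => k //.
Qed.

Definition T (p N : nat) : int := \sum_(x < p | (0 < x)%N) (-1) ^+ x * ('C(N, x))%:Z.

Lemma reduceS (p n : nat) (m : 'I_n -> nat) :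
  \sum_(j : {ffun 'I_n -> 'I_p} | [forall i, (0 < j i)%N])
        (-1) ^+ (\sum_(i < n) nat_of_ord (j i))%N * Ccoef m j
  = \sum_(t < p.+1) cc p t * \prod_(k < n) T p (t * m k).
Proof.
have E : forall j : {ffun 'I_n -> 'I_p}, Ccoef m j =
    \sum_(t < p.+1) cc p t * \prod_k ('C(t * m k, j k))%:Z.
  move=> j; rewrite /Ccoef /Phi powF; last by move=> k; rewrite ffunE.
  by apply: eq_bigr => t _; congr (_ * _); apply: eq_bigr => k _; rewrite ffunE.
under eq_bigr do rewrite E mulr_sumr.
rewrite exchange_big; apply: eq_bigr => t _.
rewrite /T bigA_distr_big mulr_sumr.
apply: eq_big => [j|j _].
  by apply/forallP/ffun_onP => H k; have := H k.
rewrite (big_morph (fun k => (-1) ^+ k : int) (@exprD _ _) (expr0 _)).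
by rewrite mulrCA -big_split.
Qed.

Lemma T0 p : T p 0 = 0.
Proof. by rewrite /T big1 // => x /lt0n_neq0 /negbTE H; rewrite bin0n H mulr0. Qed.

Lemma altsum M r : \sum_(x < r.+1) (-1) ^+ x * ('C(M.+1, x))%:Z = (-1) ^+ r * ('C(M, r))%:Z.
Proof.
elim: r => [|r IH]; first by rewrite big_ord1 !bin0.
rewrite big_ord_recr /= IH binS PoszD exprS; ring.
Qed.

Lemma T_alt p M : odd p -> T p M.+1 = ('C(M, p.-1))%:Z - 1.
Proof.
move=> hp; have p0 : (0 < p)%N by case: p hp.
rewrite /T; have := altsum M p.-1; rewrite prednK // => E.
rewrite (bigD1 (Ordinal p0)) //= in E.
have ev : ~~ odd p.-1 by case: p hp {E p0} => //= p' ->.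

rewrite -[(-1) ^+ p.-1]signr_odd (negbTE ev) expr0 !mul1r in E.
rewrite -E bin0 addrC addrK.
by apply: eq_bigl => x; rewrite lt0n.
Qed.

Lemma T1 p N : prime p -> odd p -> (0 < N)%N -> ~~ (p %| N)%N -> (p%:Z %| T p N + 1)%Z.
Proof.
move=> pr hp; case: N => // M _ ndvd.
rewrite T_alt // subrK dvdzE /=.
have E := mul_bin_diag M.+1 p.-1; rewrite prednK ?prime_gt0 // in E.
have : (p %| M.+1 * 'C(M, p.-1))%N by rewrite /= E dvdn_mulr.
by rewrite Euclid_dvdM // (negbTE ndvd).
Qed.

Lemma T2 p M : prime p -> (p%:Z %| T p (p * M))%Z.
Proof.
move=> pr; rewrite /T; apply: rpred_sum => x x0.
apply: dvdz_mull; rewrite dvdzE /=.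
have E := mul_bin_diag (p * M) x.-1; rewrite prednK // in E.
have : (p %| x * 'C(p * M, x))%N by rewrite -E dvdn_mulr // dvdn_mulr.
rewrite Euclid_dvdM // => /orP [|//].
move/(dvdn_leq x0); by rewrite leqNgt ltn_ord.
Qed.

Lemma prod2 (P : int) n (F : 'I_n -> int) : (1 < n)%N -> (forall k, (P %| F k)%Z) ->
  (P * P %| \prod_k F k)%Z.
Proof.
case: n F => [|[|n]] F //= _ H.
rewrite big_ord_recl big_ord_recl mulrA; apply: dvdz_mulr; exact: dvdz_mul.
Qed.

Lemma prodcong (P : int) n (F G : 'I_n -> int) : (forall k, (P %| F k - G k)%Z) ->
  (P %| \prod_k F k - \prod_k G k)%Z.
Proof.
move=> H; apply: (big_ind2 (fun x y => (P %| x - y)%Z)) => //.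
move=> x1 x2 y1 y2 h1 h2.
have -> : x1 * y1 - x2 * y2 = x1 * (y1 - y2) + (x1 - x2) * y2 by ring.
by apply: rpredD; [apply: dvdz_mull | apply: dvdz_mulr].
Qed.

Lemma sumcc p : (0 < p)%N -> \sum_(t < p.+1) cc p t = 0.
Proof.
move=> p0; have E := exprDn (-1 : int) 1 p.
rewrite [RHS](_ : _ = (-1 + 1 : int) ^+ p); last by rewrite addNr expr0n eqn0Ngt p0.
rewrite E.
by apply: eq_bigr => t _; rewrite expr1n mulr1 /cc -mulr_natr natz mulrC.
Qed.

Theorem lemma5p1 (p n : nat) (m : 'I_n -> nat)
  (hp : prime p) (hodd : odd p) (hn : (2 <= n)%N)
  (hm : forall i, (1 <= m i <= p.-1)%N) :
  ((p ^ 2)%N%:Z %|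
     \sum_(j : {ffun 'I_n -> 'I_p} | [forall i, (0 < j i)%N])
        (-1) ^+ (\sum_(i < n) nat_of_ord (j i))%N * Ccoef m j)%Z.
Proof.
have p0 : (0 < p)%N := prime_gt0 hp.
have n0 : (0 < n)%N by apply: leq_trans hn.
rewrite reduceS -mulnn PoszM.
have -> : \sum_(t < p.+1) cc p t * \prod_(k < n) T p (t * m k)
   = \sum_(t < p.+1) cc p t * (\prod_(k < n) T p (t * m k) - (-1) ^+ n).
  under [RHS]eq_bigr do rewrite mulrBr.
  by rewrite sumrB -mulr_suml sumcc // mul0r subr0.
rewrite (bigD1 ord0) //= (bigD1 ord_max) //=.
have c0 : cc p 0 = -1 by rewrite /cc bin0 subn0 -signr_odd hodd mul1r.
have cp : cc p p = 1 by rewrite /cc binn subnn expr0 mul1r.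
rewrite c0 cp (bigD1 (Ordinal n0)) //= mul0n T0 mul0r.
set M := \sum_(i < p.+1 | _) _.
set Q := \prod_(k < n) T p (p * m k).
have -> : -1 * (0 - (-1) ^+ n) + (1 * (Q - (-1) ^+ n) + M) = Q + M by ring.
apply: rpredD.
  by apply: prod2 => // k; apply: T2.
apply: rpred_sum => t /andP [t0 tp].
have t0' : (0 < t)%N by rewrite lt0n; apply: contraNneq t0 => h; apply/eqP/val_inj.
have tp' : (t < p)%N.
  have := ltn_ord t; rewrite ltnS leq_eqVlt => /orP [/eqP h|//].
  by move: tp; rewrite (_ : t = ord_max) ?eqxx //; apply/val_inj.
apply: dvdz_mul.
  by apply: dvdz_mulr; rewrite dvdzE /=; apply: prime_dvd_bin => //; rewrite t0'.
rewrite (_ : (-1) ^+ n = \prod_(k < n) (-1 : int)); last by rewrite prodr_const card_ord.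
apply: prodcong => k; rewrite opprK; apply: T1 => //.
  by rewrite muln_gt0 t0'; case/andP: (hm k).
rewrite Euclid_dvdM // negb_or; apply/andP; split.
  by apply/negP => /(dvdn_leq t0'); rewrite leqNgt tp'.
case/andP: (hm k) => mk1 mk2; apply/negP => /(dvdn_leq mk1).
by rewrite leqNgt (leq_ltn_trans mk2) // prednK.
by apply/eqP => /(congr1 val) /= h; rewrite h in p0.
Qed.
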